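(* There is a universal constant $c>0$ such that: for any even integer $n\ge 2$, any integer $k\ge1$, and any reals $G,\lambda>0$ with $G\ge 2\lambda$, there exist functions $f_1,\dots,f_n$ on $\mathbb{R}$ and an initialization $x_0$ satisfying Assumption (A) with parameters $n,\lambda,G$, such that for every step size $\eta>0$, SGD with random reshuffling satisfies \[ \mathbb{E}\Big[F(x_k)-\inf_xF(x)\Big]\;\ge\;c\cdot\min\left\{\lambda,\ \frac{G^2}{\lambda nk^3}\right\}. \]
   Context: Assumption (A) (parameters $n\ge 2$, $\lambda>0$, $G>0$, on $\mathbb{R}^d$): $F(x)=\frac1n\sum_{i=1}^n f_i(x)$, where each $f_i:\mathbb{R}^d\to\mathbb{R}$ is a convex quadratic function $f_i(x)=x^\top A_ix+b_i^\top x$ (with $A_i$ symmetric positive semidefinite); $F$ is $\lambda$-strongly convex with unique minimizer $x^*$; each $\nabla f_i$ is $L$-Lipschitz for some $L\le 3\lambda$; each $f_i$ satisfies $\|\nabla f_i(x)\|\le G$ for all $x$ with $\|x-x^*\|\le 1$; and the initialization satisfies $\|x_0-x^*\|\le 1$. SGD with random reshuffling with constant step size $\eta$: for each of $k$ epochs, a fresh uniformly random permutation $\pi$ of $\{1,\dots,n\}$ (independent across epochs) is drawn and the updates $x\leftarrow x-\eta\nabla f_{\pi(j)}(x)$, $j=1,\dots,n$, are performed; $x_t$ is the iterate at the end of epoch $t$. *)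

(* Defs.v *)
From Stdlib Require Import Reals.
From mathcomp Require Import all_boot all_fingroup.

Set Implicit Arguments.
Unset Strict Implicit.

Open Scope R_scope.


(* d = 1: f_i(x) = x^T A_i x + b_i^T x = a_i x^2 + b_i x, gradient 2 a_i x + b_i. *)
Definition quad (a b x : R) : R := a * x ^ 2 + b * x.
Definition quad_grad (a b x : R) : R := 2 * a * x + b.

Definition Favg (n : nat) (a b : 'I_n -> R) (x : R) : R :=
  / INR n * \big[Rplus/R0]_(i < n) quad (a i) (b i) x.
Definition Favg_grad (n : nat) (a b : 'I_n -> R) (x : R) : R :=
  / INR n * \big[Rplus/R0]_(i < n) quad_grad (a i) (b i) x.

Definition strongly_convex (lam : R) (F dF : R -> R) : Prop :=
  forall x y, F y >= F x + dF x * (y - x) + lam / 2 * (y - x) ^ 2.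

Definition unique_minimizer (F : R -> R) (xs : R) : Prop :=
  (forall x, F xs <= F x) /\ (forall y, (forall x, F y <= F x) -> y = xs).

Definition lipschitz (L : R) (g : R -> R) : Prop :=
  forall x y, Rabs (g x - g y) <= L * Rabs (x - y).

Definition assumption_A (n : nat) (lam G : R) (a b : 'I_n -> R) (x0 xs : R)
  : Prop :=
  (2 <= n)%N /\ 0 < lam /\ 0 < G /\
  (forall i, 0 <= a i) /\
  strongly_convex lam (Favg a b) (Favg_grad a b) /\
  unique_minimizer (Favg a b) xs /\
  (exists L, L <= 3 * lam /\ forall i, lipschitz L (quad_grad (a i) (b i))) /\
  (forall i x, Rabs (x - xs) <= 1 -> Rabs (quad_grad (a i) (b i) x) <= G) /\
  Rabs (x0 - xs) <= 1.

Definition rr_epoch (n : nat) (a b : 'I_n -> R) (eta : R) (s : 'S_n) (x : R)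
  : R :=
  foldl (fun y (j : 'I_n) => y - eta * quad_grad (a (s j)) (b (s j)) y)
        x (enum 'I_n).

Fixpoint rr_expect (n : nat) (a b : 'I_n -> R) (eta : R) (k : nat)
  (h : R -> R) (x : R) : R :=
  match k with
  | O => h x
  | S k' => / INR (n`!) *
      \big[Rplus/R0]_(s : 'S_n) rr_expect a b eta k' h (rr_epoch a b eta s x)
  end.

(* Main.v *)
Require Import Defs.
From HB Require Import structures.
From Stdlib Require Import Reals Lra.
From mathcomp Require Import all_boot all_fingroup.
From mathcomp Require Import zify.
Open Scope R_scope.

Lemma Rplus_assoc' : associative Rplus. Proof. move=> x y z; by rewrite Rplus_assoc. Qed.
HB.instance Definition _ := Monoid.isComLaw.Build R R0 Rplus Rplus_assoc' Rplus_comm Rplus_0_l.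

Section Sums.
Variable I : finType.

Lemma iter_plus (m : nat) (c : R) : iter m (Rplus c) 0 = INR m * c.
Proof. elim: m => [|m IH]; first by rewrite /=; lra. rewrite S_INR; change (c + iter m (Rplus c) 0 = (INR m + 1) * c); rewrite IH; lra. Qed.

Lemma sumR_const (A : {pred I}) (c : R) :
  \big[Rplus/0]_(i in A) c = INR #|A| * c.
Proof. by rewrite big_const iter_plus. Qed.

Lemma sumR_scal (J : Type) (r : seq J) (P : pred J) (c : R) (F : J -> R) :
  \big[Rplus/0]_(i <- r | P i) (c * F i) = c * \big[Rplus/0]_(i <- r | P i) F i.
Proof.
elim/big_rec2: _ => [|i y1 y2 _ ->]; lra.
Qed.

Lemma sumR_le (J : Type) (r : seq J) (P : pred J) (F G : J -> R) :
  (forall i, P i -> F i <= G i) ->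
  \big[Rplus/0]_(i <- r | P i) F i <= \big[Rplus/0]_(i <- r | P i) G i.
Proof.
move=> h; elim/big_rec2: _ => [|i y1 y2 Pi H]; first lra.
have := h i Pi; lra.
Qed.

Lemma sumR_ge0 (J : Type) (r : seq J) (P : pred J) (F : J -> R) :
  (forall i, P i -> 0 <= F i) -> 0 <= \big[Rplus/0]_(i <- r | P i) F i.
Proof.
move=> h; elim/big_rec: _ => [|i y Pi H]; first lra.
have := h i Pi; lra.
Qed.

Lemma sumR_ge_term (F : I -> R) (i0 : I) :
  (forall i, 0 <= F i) -> F i0 <= \big[Rplus/0]_i F i.
Proof.
move=> h; rewrite (bigD1 i0) //=.
have := @sumR_ge0 _ (index_enum I) (fun i => i != i0) F (fun i _ => h i). lra.
Qed.

End Sums.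

Lemma sum_full_const (T : finType) (c : R) : \big[Rplus/0]_(i : T) c = INR #|T| * c.
Proof. by rewrite sumR_const. Qed.

Lemma foldl_affine (T : Type) (j0 : T) (g : R -> T -> R) (q : R) (c : T -> R) :
  (forall y j, g y j = q * y + c j) -> forall l x,
  foldl g x l = q ^ (size l) * x +
    \big[Rplus/0]_(0 <= i < size l) (q ^ (size l - i.+1) * c (nth j0 l i)).
Proof.
move=> hg l; elim/last_ind: l => [|l v IH] x.
  by rewrite /= big_nil; lra.
rewrite foldl_rcons hg IH size_rcons big_nat_recr //= subnn nth_rcons ltnn eqxx.
have -> : \big[Rplus/0]_(0 <= i < size l)
      (q ^ ((size l).+1 - i.+1) * c (nth j0 (rcons l v) i)) =
    \big[Rplus/0]_(0 <= i < size l) (q * (q ^ (size l - i.+1) * c (nth j0 l i))).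
  apply: eq_big_nat => i /andP [_ hi]; rewrite nth_rcons hi.
  have -> : ((size l).+1 - i.+1 = (size l - i.+1).+1)%N by lia.
  simpl; lra.
rewrite sumR_scal /=; lra.
Qed.
Lemma INR_pred m : (1 <= m)%N -> INR m.-1 = INR m - 1.
Proof. case: m => [|m] // _. rewrite S_INR. change (INR m = INR m + 1 - 1). lra. Qed.

Section Perm.
Variable n : nat.
Hypothesis hn : (2 <= n)%N.
Variable s : 'I_n -> R.
Hypothesis hs0 : \big[Rplus/0]_(i < n) s i = 0.
Hypothesis hs1 : forall i, s i * s i = 1.

Definition Ex (g : 'S_n -> R) : R := / INR (n`!) * \big[Rplus/0]_(σ : 'S_n) g σ.

Lemma INR_fact_pos : 0 < INR (n`!).
Proof. apply: lt_0_INR; apply/ltP; exact: fact_gt0. Qed.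

Lemma INR_n : 2 <= INR n.
Proof. have -> : 2 = INR 2 by rewrite /=; lra. apply: le_INR; apply/leP; exact: hn. Qed.

Lemma Ex_const c : Ex (fun _ => c) = c.
Proof.
rewrite /Ex sum_full_const card_Sn. have := INR_fact_pos => h. field. lra.
Qed.

Lemma Ex_add f g : Ex (fun σ => f σ + g σ) = Ex f + Ex g.
Proof. by rewrite /Ex big_split /= Rmult_plus_distr_l. Qed.

Lemma Ex_scal c f : Ex (fun σ => c * f σ) = c * Ex f.
Proof. by rewrite /Ex sumR_scal -Rmult_assoc (Rmult_comm (/ _) c) Rmult_assoc. Qed.

Lemma Ex_perm (π : 'S_n) g : Ex g = Ex (fun σ => g (π * σ)%g).
Proof. rewrite /Ex (reindex_inj (mulgI π)) //. Qed.

Lemma Ex_sum (F : 'I_n -> 'S_n -> R) :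
  Ex (fun σ => \big[Rplus/0]_(j < n) F j σ) = \big[Rplus/0]_(j < n) Ex (F j).
Proof.
rewrite /Ex exchange_big /= sumR_scal //.
Qed.

Lemma Ex_ext f g : (forall σ, f σ = g σ) -> Ex f = Ex g.
Proof. move=> h; rewrite /Ex; congr (_ * _); apply: eq_bigr => σ _; exact: h. Qed.

Lemma sum_perm (σ : 'S_n) : \big[Rplus/0]_(j < n) s (σ j) = 0.
Proof. by move: hs0; rewrite (reindex_inj (@perm_inj _ σ)). Qed.

Lemma Eeps j : Ex (fun σ => s (σ j)) = 0.
Proof.
have h : forall j', Ex (fun σ => s (σ j')) = Ex (fun σ => s (σ j)).
  move=> j'; rewrite (Ex_perm (tperm j' j)); apply: Ex_ext => σ.
  by rewrite permM tpermL.
have : \big[Rplus/0]_(j' < n) Ex (fun σ => s (σ j')) = 0.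
  rewrite -Ex_sum (@Ex_ext _ (fun _ => 0)); first exact: Ex_const.
  move=> σ; exact: sum_perm.
rewrite (eq_bigr (fun _ => Ex (fun σ => s (σ j)))); last by move=> j' _; exact: h.
rewrite sum_full_const card_ord => h0.
have := INR_n => h2. apply: (Rmult_eq_reg_l (INR n)); lra.
Qed.

Lemma Ecov_eq i j j' : i != j -> i != j' ->
  Ex (fun σ => s (σ i) * s (σ j)) = Ex (fun σ => s (σ i) * s (σ j')).
Proof.
move=> hij hij'; rewrite (Ex_perm (tperm j j')); apply: Ex_ext => σ.
rewrite !permM tpermL tpermD //; by rewrite eq_sym.
Qed.

Lemma sumR_const_pred (P : pred 'I_n) c :
  \big[Rplus/0]_(j | P j) c = INR #|P| * c.
Proof. by rewrite big_const iter_plus. Qed.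

Lemma Ecov_off i j : i != j ->
  Ex (fun σ => s (σ i) * s (σ j)) = - / (INR n - 1).
Proof.
move=> hij.
have h0 : \big[Rplus/0]_(j' < n) Ex (fun σ => s (σ i) * s (σ j')) = 0.
  rewrite -Ex_sum (@Ex_ext _ (fun σ => 0)); first exact: Ex_const.
  by move=> σ; rewrite sumR_scal sum_perm Rmult_0_r.
move: h0; rewrite (bigD1 i) //=.
rewrite (@Ex_ext _ (fun _ => 1)); last by move=> σ; rewrite hs1.
rewrite Ex_const.
rewrite (eq_bigr (fun _ => Ex (fun σ => s (σ i) * s (σ j)))); last first.
  move=> j' hj'; apply: Ecov_eq => //; by rewrite eq_sym.
rewrite sumR_const_pred cardC1 card_ord => h.
have hn2 := INR_n.
have e : INR n.-1 = INR n - 1.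
  apply: INR_pred; lia.
rewrite e in h.
move: h; set k := Ex _ => h.
have hne : INR n - 1 <> 0 by lra.
field_simplify_eq; [|lra].
nra.
Qed.

Definition kap := - / (INR n - 1).

Lemma Ecov i j : Ex (fun σ => s (σ i) * s (σ j)) = if i == j then 1 else kap.
Proof.
case: eqP => [<-|/eqP h]; last exact: Ecov_off.
rewrite (@Ex_ext _ (fun _ => 1)) ?Ex_const // => σ; exact: hs1.
Qed.

Definition Zs (w : 'I_n -> R) (σ : 'S_n) := \big[Rplus/0]_(j < n) (w j * s (σ j)).

Lemma EZ w : Ex (Zs w) = 0.
Proof.
rewrite /Zs Ex_sum big1 // => j _.
by rewrite (Ex_scal (w j) (fun σ => s (σ j))) Eeps Rmult_0_r.
Qed.

Lemma sumR_mulr (F : 'I_n -> R) c :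
  \big[Rplus/0]_(i < n) F i * c = \big[Rplus/0]_(i < n) (F i * c).
Proof. rewrite Rmult_comm -sumR_scal; apply: eq_bigr => i _; ring. Qed.

Lemma EZ2 w : Ex (fun σ => Zs w σ * Zs w σ) =
  (\big[Rplus/0]_(i < n) \big[Rplus/0]_(j < n) (w i - w j) ^ 2) / (2 * (INR n - 1)).
Proof.
set D := \big[Rplus/0]_(i < n) _.
rewrite (@Ex_ext _ (fun σ => \big[Rplus/0]_(i < n) \big[Rplus/0]_(j < n)
            ((w i * w j) * (s (σ i) * s (σ j))))); last first.
  move=> σ; rewrite /Zs sumR_mulr; apply: eq_bigr => i _.
  rewrite -sumR_scal; apply: eq_bigr => j _; ring.
rewrite Ex_sum.
rewrite (eq_bigr (fun i => \big[Rplus/0]_(j < n) ((w i * w j) *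
                    (if i == j then 1 else kap)))); last first.
  move=> i _; rewrite Ex_sum; apply: eq_bigr => j _.
  by rewrite (Ex_scal (w i * w j) (fun σ => s (σ i) * s (σ j))) Ecov.
set W := \big[Rplus/0]_(j < n) w j.
set P := \big[Rplus/0]_(j < n) (w j * w j).
have hW : forall i, \big[Rplus/0]_(j < n | j != i) w j = W - w i.
  move=> i; by rewrite /W [X in _ = X - _](bigD1 i) //= Rplus_comm /Rminus Rplus_assoc Rplus_opp_r Rplus_0_r.
have h1 : forall i, \big[Rplus/0]_(j < n) ((w i * w j) * (if i == j then 1 else kap))
            = w i * w i * (1 - kap) + kap * (w i * W).
  move=> i; rewrite (bigD1 i) //= eqxx.
  rewrite (eq_bigr (fun j => (kap * w i) * w j)); last first.
    move=> j hj; rewrite eq_sym (negbTE hj); ring.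
  rewrite sumR_scal hW; ring.
rewrite (eq_bigr _ (fun i _ => h1 i)) big_split /= -sumR_mulr sumR_scal -sumR_mulr.
have h2 : forall i, \big[Rplus/0]_(j < n) (w i - w j) ^ 2 =
     INR n * (w i * w i) - 2 * (w i * W) + P.
  move=> i; rewrite (eq_bigr (fun j => w i * w i + (-2 * w i) * w j + w j * w j));
     last by move=> j _; ring.
  rewrite !big_split /= sum_full_const card_ord sumR_scal -/W -/P; ring.
rewrite /D (eq_bigr _ (fun i _ => h2 i)) !big_split /= -sumR_scal sum_full_const card_ord.
have e1 : \big[Rplus/0]_(i < n) (INR n * (w i * w i)) = INR n * P by rewrite sumR_scal.
have e2 : \big[Rplus/0]_(i < n) - (2 * (w i * W)) = -2 * W * W.
  rewrite (eq_bigr (fun i => (-2 * W) * w i)); last by move=> i _; ring.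
  by rewrite sumR_scal.
have e3 : \big[Rplus/0]_i (\big[Rplus/0]_(i0 < n) w i0 * w i) = W * W by rewrite sumR_scal.
rewrite e1 e2 e3 -/P.
have hn2 := INR_n. rewrite /kap. field. lra.
Qed.
End Perm.

Definition sg {n : nat} (i : 'I_n) : R := if odd i then -1 else 1.

Lemma sum_sg_nat m : \big[Rplus/0]_(0 <= i < m.*2) (if odd i then -1 else 1) = 0.
Proof.
elim: m => [|m IH]; first by rewrite big_nil.
rewrite doubleS !big_nat_recr //= ?IH.
rewrite odd_double /=; lra.
Qed.

Lemma sum_sg n : ~~ odd n -> \big[Rplus/0]_(i < n) sg i = 0.
Proof.
move=> hodd; rewrite /sg -(big_mkord xpredT (fun i => if odd i then -1 else 1)).
have := odd_double_half n; rewrite (negbTE hodd) add0n => <-.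
exact: sum_sg_nat.
Qed.

Lemma sg_sq n (i : 'I_n) : sg i * sg i = 1.
Proof. rewrite /sg; case: (odd i); lra. Qed.

Lemma sg_abs n (i : 'I_n) : Rabs (sg i) = 1.
Proof. rewrite /sg; case: (odd i); [rewrite Rabs_Ropp Rabs_R1 // | exact: Rabs_R1]. Qed.

Fixpoint geo (z : R) (k : nat) : R :=
  match k with O => 0 | S k => geo z k + z ^ k end.

Section Constr.
Variables (n : nat) (lam G eta : R).
Hypothesis hn : (2 <= n)%N.
Hypothesis hodd : ~~ odd n.

Definition gam := G / 2.
Definition av : 'I_n -> R := fun _ => lam / 2.
Definition bv : 'I_n -> R := fun i => gam * sg i.
Definition qq := 1 - eta * lam.
Definition ww : 'I_n -> R := fun j => - (eta * gam) * qq ^ (n - j.+1).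

Lemma sum_bv : \big[Rplus/0]_(i < n) bv i = 0.
Proof. by rewrite /bv sumR_scal sum_sg // Rmult_0_r. Qed.

Lemma Favg_eq x : Favg av bv x = lam / 2 * x ^ 2.
Proof.
rewrite /Favg /quad /av big_split /= sum_full_const card_ord.
rewrite -sumR_mulr sum_bv.
have : 2 <= INR n.
  have -> : 2 = INR 2 by rewrite /=; lra. apply: le_INR; apply/leP; exact: hn.
move=> h; field; lra.
Qed.

Lemma epoch_eq (σ : 'S_n) x :
  rr_epoch av bv eta σ x = qq ^ n * x + Zs n sg ww σ.
Proof.
have j0 : 'I_n by exists 0%N; lia.
rewrite /rr_epoch (@foldl_affine _ j0 _ qq (fun j => - (eta * gam) * sg (σ j))); last first.
  move=> y j; rewrite /quad_grad /av /bv /qq; field.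
rewrite -cardT card_ord big_mkord /Zs; congr (_ + _); apply: eq_bigr => i _.
rewrite nth_ord_enum /ww; ring.
Qed.


Definition VV := Ex n (fun σ => Zs n sg ww σ * Zs n sg ww σ).

Lemma rr_main k x :
  rr_expect av bv eta k (fun y => Favg av bv y - Favg av bv 0) x =
  lam / 2 * ((qq ^ n) ^ 2) ^ k * x ^ 2 + lam / 2 * VV * geo ((qq ^ n) ^ 2) k.
Proof.
elim: k x => [|k IH] x.
  rewrite /= !Favg_eq; ring.
change (Ex n (fun σ => rr_expect av bv eta k
          (fun y => Favg av bv y - Favg av bv 0) (rr_epoch av bv eta σ x)) =
  lam / 2 * ((qq ^ n) ^ 2) ^ k.+1 * x ^ 2 + lam / 2 * VV * geo ((qq ^ n) ^ 2) k.+1).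
set A := lam / 2 * ((qq ^ n) ^ 2) ^ k.
set B := lam / 2 * VV * geo ((qq ^ n) ^ 2) k.
rewrite (@Ex_ext n _ (fun σ => (A * (qq ^ n) ^ 2 * x ^ 2 + B) +
     ((2 * A * qq ^ n * x) * Zs n sg ww σ + A * (Zs n sg ww σ * Zs n sg ww σ)))); last first.
  move=> σ; rewrite IH epoch_eq -/A -/B; ring.
rewrite Ex_add Ex_const Ex_add.
rewrite (@Ex_scal n (2 * A * qq ^ n * x) (Zs n sg ww)) (@Ex_scal n A (fun σ => Zs n sg ww σ * Zs n sg ww σ)).
rewrite (@EZ n hn sg (@sum_sg n hodd) ww) -/VV /A /B /=; ring.
Qed.


Lemma Favg_grad_eq x : Favg_grad av bv x = lam * x.
Proof.
rewrite /Favg_grad /quad_grad /av big_split /= sum_full_const card_ord sum_bv.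
have : 2 <= INR n.
  have -> : 2 = INR 2 by rewrite /=; lra. apply: le_INR; apply/leP; exact: hn.
move=> h; field; lra.
Qed.

Lemma assumA : 0 < lam -> 0 < G -> G >= 2 * lam -> assumption_A lam G av bv 1 0.
Proof.
move=> hl hG hGl.
split; first exact: hn. split; first exact: hl. split; first exact: hG.
split; first by move=> i; rewrite /av; lra.
split.
  move=> x y; rewrite !Favg_eq Favg_grad_eq.
  have : 0 <= (y - x) ^ 2 by apply: pow2_ge_0. nra.
split.
  split; first by move=> x; rewrite !Favg_eq; have := pow2_ge_0 x; nra.
  move=> y hy; have := hy 0; rewrite !Favg_eq => h.
  have : y ^ 2 <= 0 by nra.
  have := pow2_ge_0 y. move=> h1 h2.
  have h3 : y ^ 2 = 0 by lra.
  by apply: Rsqr_0_uniq; rewrite /Rsqr; lra.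
split.
  exists lam; split; first lra.
  move=> i x y; rewrite /lipschitz /quad_grad /av.
  have -> : 2 * (lam / 2) * x + bv i - (2 * (lam / 2) * y + bv i) = lam * (x - y) by field.
  rewrite Rabs_mult Rabs_pos_eq; lra.
split.
  move=> i x hx; rewrite /quad_grad /av /bv /gam.
  rewrite Rminus_0_r in hx.
  apply: Rle_trans (Rabs_triang _ _) _.
  have -> : 2 * (lam / 2) * x = lam * x by field.
  rewrite !Rabs_mult sg_abs Rabs_pos_eq; last lra.
  rewrite (Rabs_pos_eq G); last lra.
  rewrite (Rabs_pos_eq (/ 2)); last lra.
  nra.
rewrite Rminus_0_r Rabs_R1; lra.
Qed.

End Constr.

Definition Dq (n : nat) (q : R) : R :=
  \big[Rplus/0]_(i < n) \big[Rplus/0]_(j < n) (q ^ i - q ^ j) ^ 2.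

Lemma sum_rev (n : nat) (F : nat -> R) :
  \big[Rplus/0]_(i < n) F (n - i.+1)%N = \big[Rplus/0]_(i < n) F i.
Proof.
rewrite (reindex_inj rev_ord_inj) /=; apply: eq_bigr => i _.
congr F; have := ltn_ord i; lia.
Qed.

Lemma VV_eq n lam G eta : (2 <= n)%N -> ~~ odd n ->
  VV n lam G eta = (eta * gam G) ^ 2 * Dq n (qq lam eta) / (2 * (INR n - 1)).
Proof.
move=> hn hodd; rewrite /VV (@EZ2 n hn sg (@sum_sg n hodd) (@sg_sq n)).
rewrite /Rdiv; congr (_ * _).
set f := fun a b : nat => (qq lam eta ^ a - qq lam eta ^ b) ^ 2.
transitivity ((eta * gam G) ^ 2 * \big[Rplus/0]_(i < n) \big[Rplus/0]_(j < n)
    f (n - i.+1)%N (n - j.+1)%N).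
  rewrite -sumR_scal; apply: eq_bigr => i _.
  rewrite -sumR_scal; apply: eq_bigr => j _; rewrite /f /ww; ring.
congr (_ * _).
rewrite (eq_bigr (fun i : 'I_n => \big[Rplus/0]_(j < n) f (n - i.+1)%N j)); last first.
  move=> i _; exact: (sum_rev n (f (n - i.+1)%N)).
by rewrite (sum_rev n (fun a => \big[Rplus/0]_(j < n) f a j)).
Qed.

Lemma bern (u : R) (m : nat) : 0 <= u <= 1 -> 1 - INR m * u <= (1 - u) ^ m.
Proof.
move=> hu; elim: m => [|m IH]; first by rewrite /=; lra.
rewrite S_INR /=.
have h0 : 0 <= (1 - u) ^ m by apply: pow_le; lra.
have := pos_INR m. nra.
Qed.

Lemma bern2 (u : R) (m : nat) : 0 <= u <= 1 -> (1 - u) ^ m * (1 + INR m * u) <= 1.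
Proof.
move=> hu; elim: m => [|m IH]; first by rewrite /=; lra.
rewrite S_INR /=.
have h0 : 0 <= (1 - u) ^ m by apply: pow_le; lra.
have hm := pos_INR m.
have : (1 - u) * (1 + (INR m + 1) * u) <= 1 + INR m * u by nra.
move=> h1.
have : (1 - u) ^ m * ((1 - u) * (1 + (INR m + 1) * u)) <= (1 - u) ^ m * (1 + INR m * u).
  apply: Rmult_le_compat_l => //.
nra.
Qed.

Lemma pow_anti (q : R) (a b : nat) : 0 <= q <= 1 -> (a <= b)%N -> q ^ b <= q ^ a.
Proof.
move=> hq hab; have -> : b = (a + (b - a))%N by lia.
rewrite pow_add.
have h1 : q ^ (b - a) <= 1.
  have := pow_incr q 1 (b - a); rewrite pow1; lra.
have h2 : 0 <= q ^ a by apply: pow_le; lra.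
have h3 : 0 <= q ^ (b - a) by apply: pow_le; lra.
nra.
Qed.

Lemma geo_ge0 z k : 0 <= z -> 0 <= geo z k.
Proof.
move=> hz; elim: k => [|k IH] /=; first lra.
have := pow_le z k hz; lra.
Qed.

Lemma geo_mono z k k' : 0 <= z -> (k' <= k)%N -> geo z k' <= geo z k.
Proof.
move=> hz; elim: k => [|k IH] h.
  have -> : k' = 0%N by lia. lra.
case: (leqP k' k) => h'.
  have := IH h'; have := pow_le z k hz; rewrite /=; lra.
have -> : k' = k.+1 by lia. lra.
Qed.

Lemma geo_lb z m : 0 <= z <= 1 -> INR m * z ^ m <= geo z m.
Proof.
move=> hz; elim: m => [|m IH]; first by rewrite /=; lra.
rewrite S_INR /=.
have h1 : z * z ^ m <= z ^ m.
  have := pow_le z m (proj1 hz); nra.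
have := pow_le z m (proj1 hz); have := pos_INR m; nra.
Qed.

Lemma floor_ex (x : R) : 1 <= x -> exists p : nat, (1 <= p)%N /\ INR p <= x /\ x <= 2 * INR p.
Proof.
move=> hx.
have [h1 h2] := archimed x.
set z := up x in h1 h2.
have hz : (1 <= z)%Z.
  have : (0 < z)%Z by apply: lt_IZR; lra. lia.
exists (Z.to_nat (z - 1)).
have e : INR (Z.to_nat (z - 1)) = IZR z - 1.
  rewrite INR_IZR_INZ Znat.Z2Nat.id; last lia.
  rewrite minus_IZR; done.
rewrite e.
split.
  have : Z.to_nat (z - 1) <> 0%N.
    move=> h0; rewrite h0 /= in e; lra.
  lia.
have hz2 : (2 <= z)%Z by (have : (1 < z)%Z by apply: lt_IZR; lra); lia.
have := IZR_le _ _ hz2.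
split; lra.
Qed.

Lemma count_lt n p c :
  \big[Rplus/0]_(i < n) (if (i < p)%N then c else 0) = INR (minn n p) * c.
Proof.
rewrite -(big_mkord xpredT (fun i => if (i < p)%N then c else 0)).
elim: n => [|n IH]; first by rewrite big_nil min0n /=; lra.
rewrite big_nat_recr //= IH.
case: (ltnP n p) => h.
  have -> : minn n.+1 p = n.+1 by lia.
  rewrite S_INR; lra.
have -> : minn n.+1 p = p by lia.
lra.
Qed.

Lemma count_ge n m c :
  \big[Rplus/0]_(i < n) (if (m <= i)%N then c else 0) = INR (n - m) * c.
Proof.
rewrite -(big_mkord xpredT (fun i => if (m <= i)%N then c else 0)).
elim: n => [|n IH]; first by rewrite big_nil sub0n /=; lra.
rewrite big_nat_recr //= IH.
case: (leqP m n) => h.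
  have -> : (n.+1 - m = (n - m).+1)%N by lia.
  rewrite S_INR; lra.
have -> : (n.+1 - m = 0)%N by lia.
have -> : (n - m = 0)%N by lia.
rewrite /=; lra.
Qed.

Lemma Dq_ge0_in n q i : 0 <= \big[Rplus/0]_(j < n) (q ^ i - q ^ j) ^ 2.
Proof. apply: sumR_ge0 => j _; exact: pow2_ge_0. Qed.

Lemma Dq_lb1 n q : (2 <= n)%N -> (1 - q) ^ 2 <= Dq n q.
Proof.
move=> hn.
have h0 : (0 < n)%N by lia.
have h1 : (1 < n)%N by lia.
rewrite /Dq; apply: Rle_trans (sumR_ge_term _ _ (Ordinal h0) (fun i => Dq_ge0_in n q i)).
apply: Rle_trans (sumR_ge_term _ _ (Ordinal h1) (fun j => pow2_ge_0 _)).
rewrite /= !Rmult_1_r; lra.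
Qed.

Lemma Dq_lb2 n q p : 0 <= q <= 1 -> (1 <= p)%N -> (2 * p <= n + 1)%N ->
  INR p * INR (n + 1 - 2 * p) * (q ^ p * (1 - q ^ p)) ^ 2 <= Dq n q.
Proof.
move=> hq hp hpn.
set m0 := (q ^ p * (1 - q ^ p)) ^ 2.
have hqp : q ^ p <= 1 by have := pow_incr q 1 p; rewrite pow1; lra.
have hqp0 : 0 <= q ^ p by apply: pow_le; lra.
have hm0 : 0 <= m0 by apply: pow2_ge_0.
have key : forall i j : nat, (i < p)%N -> (2 * p - 1 <= j)%N -> m0 <= (q ^ i - q ^ j) ^ 2.
  move=> i j hi hj.
  have a1 : q ^ (p - 1) <= q ^ i by apply: pow_anti => //; lia.
  have a2 : q ^ j <= q ^ (2 * p - 1) by apply: pow_anti => //.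
  have e : q ^ (2 * p - 1) = q ^ (p - 1) * q ^ p.
    rewrite -pow_add; congr (_ ^ _); lia.
  have a3 : q ^ p <= q ^ (p - 1) by apply: pow_anti => //; lia.
  have a4 : 0 <= q ^ p * (1 - q ^ p) by nra.
  have a5 : q ^ p * (1 - q ^ p) <= q ^ i - q ^ j by nra.
  rewrite /m0; apply: pow_incr; lra.
have step : forall i : 'I_n, (if (i < p)%N then INR (n - (2 * p - 1)) * m0 else 0)
     <= \big[Rplus/0]_(j < n) (q ^ i - q ^ j) ^ 2.
  move=> i; case: ifP => hi; last exact: Dq_ge0_in.
  rewrite -count_ge; apply: sumR_le => j _.
  case: ifP => hj; [exact: key | exact: pow2_ge_0].
rewrite /Dq; apply: Rle_trans (sumR_le _ _ _ _ _ (fun (i : 'I_n) _ => step i)).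
rewrite count_lt.
have -> : minn n p = p by lia.
have -> : (n - (2 * p - 1) = n + 1 - 2 * p)%N by lia.
lra.
Qed.

Lemma div_le a b d e : 0 < b -> 0 < e -> a * e <= d * b -> a / b <= d / e.
Proof.
move=> hb he h.
have -> : a / b = (a * e) * / (b * e) by field; lra.
have -> : d / e = (d * b) * / (b * e) by field; lra.
apply: Rmult_le_compat_r => //.
apply: Rlt_le; apply: Rinv_0_lt_compat; nra.
Qed.

Lemma reduce (N K lam gm u Dv g c : R) : 2 <= N -> 1 <= K -> 0 < lam -> 0 < gm -> 0 < u ->
  0 <= c -> 16 * c <= u ^ 2 * Dv * g * K ^ 3 ->
  c * (4 * gm ^ 2 / (lam * N * K ^ 3)) <=
  lam / 2 * ((u / lam * gm) ^ 2 * Dv / (2 * (N - 1))) * g.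
Proof.
move=> hN hK hl hg hu hc h.
have hK3 : 1 <= K ^ 3.
  have := pow_incr 1 K 3; rewrite pow1; lra.
have -> : c * (4 * gm ^ 2 / (lam * N * K ^ 3)) = (4 * c * gm ^ 2) / (lam * N * K ^ 3).
  field; split; lra.
have -> : lam / 2 * ((u / lam * gm) ^ 2 * Dv / (2 * (N - 1))) * g =
   (gm ^ 2 * (u ^ 2 * Dv * g)) / (4 * lam * (N - 1)).
  field; lra.
apply: div_le.
- have : 0 < lam * N by nra. nra.
- nra.
set X := u ^ 2 * Dv * g.
have hg2 : 0 < gm ^ 2 by nra.
have e1 : 4 * c * gm ^ 2 * (4 * lam * (N - 1)) <= (gm ^ 2 * lam * N) * (16 * c).
  have : 0 <= c * gm ^ 2 * lam by apply: Rmult_le_pos; nra.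
  nra.
have e2 : (gm ^ 2 * lam * N) * (16 * c) <= (gm ^ 2 * lam * N) * (X * K ^ 3).
  apply: Rmult_le_compat_l => //. have : 0 < gm ^ 2 * lam by nra. nra.
nra.
Qed.
Definition cst : R := / 1073741824.

Lemma INR_muln a b : INR (a * b)%N = INR a * INR b. Proof. exact: mult_INR. Qed.
Lemma INR_addn a b : INR (a + b)%N = INR a + INR b. Proof. exact: plus_INR. Qed.
Lemma INR_subn a b : (b <= a)%N -> INR (a - b)%N = INR a - INR b.
Proof. move=> h; apply: minus_INR; exact/leP. Qed.
Lemma nat_le_of_INR a b : INR a <= INR b -> (a <= b)%N.
Proof. move=> h; apply/leP; exact: INR_le. Qed.
Lemma nat_lt_of_INR a b : INR a < INR b -> (a < b)%N.
Proof. move=> h; apply/ltP; exact: INR_lt. Qed.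

Lemma geo_ge1 z k : 0 <= z -> (1 <= k)%N -> 1 <= geo z k.
Proof.
move=> hz hk; have := @geo_mono z k 1%N hz hk. rewrite /=; lra.
Qed.

Lemma cst_val : 16 * cst = / 67108864.
Proof. rewrite /cst; field. Qed.

Lemma regD n k u : (2 <= n)%N -> (1 <= k)%N -> / 32 < u ->
  16 * cst <= u ^ 2 * Dq n (1 - u) * geo (((1 - u) ^ n) ^ 2) k * INR k ^ 3.
Proof.
move=> hn hk hu.
have hK : 1 <= INR k.
  have -> : 1 = INR 1 by rewrite /=; lra. apply: le_INR; apply/leP; exact: hk.
have hK3 : 1 <= INR k ^ 3 by have := pow_incr 1 (INR k) 3; rewrite pow1; lra.
have hD := @Dq_lb1 n (1 - u) hn.
rewrite (_ : 1 - (1 - u) = u) in hD; last ring.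
have hg := @geo_ge1 _ k (pow2_ge_0 ((1 - u) ^ n)) hk.
have hu0 : 0 < u by lra.
set D := Dq n (1 - u) in hD *. set g := geo _ k in hg *.
have h1 : u ^ 2 * u ^ 2 <= u ^ 2 * D by apply: Rmult_le_compat_l => //; apply: pow2_ge_0.
have h2 : 0 <= u ^ 2 * u ^ 2 by have := pow2_ge_0 u; nra.
have h3 : u ^ 2 * D <= u ^ 2 * D * g by nra.
have h4 : u ^ 2 * D * g <= u ^ 2 * D * g * INR k ^ 3 by nra.
have h5 : / 32 ^ 4 <= u ^ 2 * u ^ 2.
  have -> : u ^ 2 * u ^ 2 = u ^ 4 by ring.
  rewrite -pow_inv; apply: pow_incr; split; last lra.
  apply: Rlt_le; apply: Rinv_0_lt_compat; lra.
rewrite cst_val.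
have : / 67108864 <= / 32 ^ 4 by apply: Rinv_le_contravar; rewrite /=; lra.
lra.
Qed.

Lemma regC n k u : (2 <= n)%N -> (1 <= k)%N -> / (4 * INR n) < u -> u <= / 32 ->
  16 * cst <= u ^ 2 * Dq n (1 - u) * geo (((1 - u) ^ n) ^ 2) k * INR k ^ 3.
Proof.
move=> hn hk hu1 hu2.
have hN : 2 <= INR n.
  have -> : 2 = INR 2 by rewrite /=; lra. apply: le_INR; apply/leP; exact: hn.
have hK : 1 <= INR k.
  have -> : 1 = INR 1 by rewrite /=; lra. apply: le_INR; apply/leP; exact: hk.
have hK3 : 1 <= INR k ^ 3 by have := pow_incr 1 (INR k) 3; rewrite pow1; lra.
have hg := @geo_ge1 _ k (pow2_ge_0 ((1 - u) ^ n)) hk.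
have hu0 : 0 < u.
  apply: Rlt_trans hu1; apply: Rinv_0_lt_compat; lra.
have huN : 1 < 4 * INR n * u.
  have := Rmult_lt_compat_l (4 * INR n) _ _ (ltac:(lra)) hu1.
  rewrite Rinv_r; lra.
have hx : 1 <= / (16 * u).
  rewrite -Rinv_1; apply: Rinv_le_contravar; lra.
have [p [hp1 [hp2 hp3]]] := @floor_ex _ hx.
have h16 : / (16 * u) * (16 * u) = 1 by field; lra.
have hPu1 : INR p * u <= / 16.
  have : INR p * (16 * u) <= 1 by nra. lra.
have hPu2 : / 32 <= INR p * u.
  have : 1 <= 2 * INR p * (16 * u) by nra. lra.
have hP1 : 1 <= INR p.
  have -> : 1 = INR 1 by rewrite /=; lra. apply: le_INR; apply/leP; exact: hp1.
have h2p : (2 * p <= n + 1)%N.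
  apply: nat_le_of_INR; rewrite INR_muln INR_addn /=. nra.
have eR : INR (n + 1 - 2 * p) = INR n + 1 - 2 * INR p.
  rewrite INR_subn // INR_addn INR_muln /=; ring.
have hR : INR n / 2 <= INR (n + 1 - 2 * p) by rewrite eR; nra.
have hq : 0 <= 1 - u <= 1 by lra.
have hD := @Dq_lb2 n (1 - u) p hq hp1 h2p.
have hu1' : 0 <= u <= 1 by lra.
have hb := @bern u p hu1'.
have hb2 := @bern2 u p hu1'.
set y := (1 - u) ^ p in hD hb hb2.
have hy1 : 15 / 16 <= y by lra.
have hy2 : y * (INR p * u) <= 1 - y by nra.
have hm : 1 / 64 <= y * (1 - y) by nra.
have hm2 : / 4096 <= (y * (1 - y)) ^ 2.
  have -> : / 4096 = (1 / 64) ^ 2 by field.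
  apply: pow_incr; lra.
set D := Dq n (1 - u) in hD *. set g := geo _ k in hg *.
set R0' := INR (n + 1 - 2 * p) in hD hR *.
set m := (y * (1 - y)) ^ 2 in hD hm2 *.
have hPR : 0 <= INR p * R0' by nra.
have hD' : INR p * R0' / 4096 <= D.
  have : INR p * R0' * / 4096 <= INR p * R0' * m by apply: Rmult_le_compat_l.
  lra.
have hX1 : / 1048576 <= u ^ 2 * D.
  have e1 : u * R0' >= / 8 by nra.
  have e2 : u ^ 2 * (INR p * R0' / 4096) = (INR p * u) * (u * R0') / 4096 by field.
  have e3 : / 32 * / 8 <= (INR p * u) * (u * R0').
    apply: Rmult_le_compat; lra.
  have e4 : u ^ 2 * (INR p * R0' / 4096) <= u ^ 2 * D.
    apply: Rmult_le_compat_l => //; apply: pow2_ge_0.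
  lra.
have h3 : u ^ 2 * D <= u ^ 2 * D * g by nra.
have h4 : u ^ 2 * D * g <= u ^ 2 * D * g * INR k ^ 3 by nra.
rewrite cst_val. lra.
Qed.

Lemma p_ex n : (2 <= n)%N -> exists p, (1 <= p /\ 3 * p <= n.+1 /\ n <= 4 * p)%N.
Proof. move=> h; exists (n.+1 %/ 3)%N. lia. Qed.

Lemma regB n k u : (2 <= n)%N -> (1 <= k)%N -> / (4 * INR n * INR k) < u ->
  u <= / (4 * INR n) ->
  16 * cst <= u ^ 2 * Dq n (1 - u) * geo (((1 - u) ^ n) ^ 2) k * INR k ^ 3.
Proof.
move=> hn hk hu1 hu2.
have hN : 2 <= INR n.
  have -> : 2 = INR 2 by rewrite /=; lra. apply: le_INR; apply/leP; exact: hn.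
have hK : 1 <= INR k.
  have -> : 1 = INR 1 by rewrite /=; lra. apply: le_INR; apply/leP; exact: hk.
set N := INR n in hN hu1 hu2 *. set K := INR k in hK hu1 *.
have hu0 : 0 < u.
  apply: Rlt_trans hu1; apply: Rinv_0_lt_compat; nra.
have hNu : N * u <= / 4.
  have := Rmult_le_compat_l (4 * N) _ _ (ltac:(lra)) hu2.
  rewrite Rinv_r; lra.
have hNKu : / 4 < N * u * K.
  have := Rmult_lt_compat_l (4 * N * K) _ _ (ltac:(nra)) hu1.
  rewrite Rinv_r; nra.
have [p [hp1 [hp2 hp3]]] := @p_ex n hn.
have hP1 : 1 <= INR p.
  have -> : 1 = INR 1 by rewrite /=; lra. apply: le_INR; apply/leP; exact: hp1.
have i2 : INR 2 = 2 by simpl; lra.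
have i3 : INR 3 = 3 by simpl; lra.
have i4 : INR 4 = 4 by simpl; lra.
have hP3 : 3 * INR p <= N + 1.
  have := le_INR _ _ (elimT leP hp2); rewrite INR_muln i3 S_INR -/N. lra.
have hP4 : N <= 4 * INR p.
  have := le_INR _ _ (elimT leP hp3); rewrite INR_muln i4 -/N. lra.
have h2p : (2 * p <= n + 1)%N by lia.
have eR : INR (n + 1 - 2 * p) = N + 1 - 2 * INR p.
  rewrite INR_subn // INR_addn INR_muln i2 -/N; simpl INR; ring.
have hR : INR p <= INR (n + 1 - 2 * p) by rewrite eR; lra.
have hPu : INR p * u <= / 8 by nra.
have hu1' : 0 <= u <= 1 by nra.
have hq : 0 <= 1 - u <= 1 by lra.
have hD := @Dq_lb2 n (1 - u) p hq hp1 h2p.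
have hb := @bern u p hu1'.
have hb2 := @bern2 u p hu1'.
set y := (1 - u) ^ p in hD hb hb2.
have hy1 : 7 / 8 <= y by lra.
have hy2 : y * (INR p * u) <= 1 - y by nra.
have hPu0 : 0 <= INR p * u by nra.
have hm : INR p * u / 2 <= y * (1 - y) by nra.
have hm2 : (INR p * u / 2) ^ 2 <= (y * (1 - y)) ^ 2.
  apply: pow_incr; lra.
set D := Dq n (1 - u) in hD *.
set R0' := INR (n + 1 - 2 * p) in hD hR *.
set m := (y * (1 - y)) ^ 2 in hD hm2 *.
have hPR : INR p * INR p <= INR p * R0' by nra.
have hD1 : INR p * INR p * (INR p * u / 2) ^ 2 <= D.
  have : INR p * INR p * (INR p * u / 2) ^ 2 <= INR p * R0' * m.
    apply: Rmult_le_compat => //; try nra.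
  lra.
have hx : 1 <= / (4 * N * u).
  rewrite -Rinv_1; apply: Rinv_le_contravar; nra.
have [k' [hk1 [hk2 hk3]]] := @floor_ex _ hx.
have hinv : / (4 * N * u) * (4 * N * u) = 1 by field; lra.
have hk'K : (k' <= k)%N.
  apply: ltnW; apply: nat_lt_of_INR; rewrite -/K.
  have : INR k' * (4 * N * u) <= 1 by nra. nra.
have hk'u : 1 <= 2 * INR k' * (4 * N * u) by nra.
have hk'u2 : INR k' * (4 * N * u) <= 1 by nra.
have hz : 0 <= ((1 - u) ^ n) ^ 2 <= 1.
  split; first exact: pow2_ge_0.
  have : (1 - u) ^ n <= 1 by have := pow_incr (1 - u) 1 n hq; rewrite pow1; lra.
  have : 0 <= (1 - u) ^ n by apply: pow_le; lra. nra.
have hg1 := @geo_lb _ k' hz.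
have hg2 := @geo_mono (((1 - u) ^ n) ^ 2) k k' (proj1 hz) hk'K.
have hzk : (((1 - u) ^ n) ^ 2) ^ k' = (1 - u) ^ (n * 2 * k')%coq_nat by rewrite !pow_mult.
have hb3 := @bern u (n * 2 * k')%coq_nat hu1'.
rewrite !mult_INR -/N -hzk in hb3.
have e2 : INR 2 = 2 by rewrite /=; lra.
rewrite e2 in hb3.
have hzk2 : / 2 <= (((1 - u) ^ n) ^ 2) ^ k' by nra.
set g := geo _ k in hg2 *.
have hk0 : 0 <= INR k' by lra.
have hg3 : INR k' / 2 <= g.
  have : INR k' * / 2 <= INR k' * (((1 - u) ^ n) ^ 2) ^ k' by apply: Rmult_le_compat_l.
  lra.
have hK3 : 1 <= K ^ 3 by have := pow_incr 1 K 3; rewrite pow1; lra.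
set P := INR p in hP1 hP3 hP4 hPu hD1 hPR hm hm2 hy2 hPu0 hR.
have hu2p : 0 <= u ^ 2 by apply: pow2_ge_0.
have hD2 : 0 <= D by nra.
have s1 : u ^ 2 * (P * P * (P * u / 2) ^ 2) * (INR k' / 2) <= u ^ 2 * D * g.
  have t1 : 0 <= P * P * (P * u / 2) ^ 2 by have := pow2_ge_0 (P * u / 2); nra.
  have t2 : u ^ 2 * (P * P * (P * u / 2) ^ 2) <= u ^ 2 * D by apply: Rmult_le_compat_l.
  have t3 : 0 <= u ^ 2 * (P * P * (P * u / 2) ^ 2) by nra.
  apply: Rmult_le_compat => //; lra.
have e3 : u ^ 2 * (P * P * (P * u / 2) ^ 2) * (INR k' / 2) =
          (P * u) ^ 4 * INR k' / 8 by field.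
have hPN : N * u / 4 <= P * u by nra.
have hk'4 : / (8 * N * u) <= INR k'.
  have : / (4 * N * u) = 2 * / (8 * N * u) by field; lra. lra.
have s2 : (N * u / 4) ^ 4 * / (8 * N * u) / 8 <= (P * u) ^ 4 * INR k' / 8.
  have : (N * u / 4) ^ 4 <= (P * u) ^ 4 by apply: pow_incr; nra.
  have : 0 <= (N * u / 4) ^ 4 by apply: pow_le; nra.
  have : 0 <= / (8 * N * u) by apply: Rlt_le; apply: Rinv_0_lt_compat; nra.
  nra.
have e4 : (N * u / 4) ^ 4 * / (8 * N * u) / 8 = (N * u) ^ 3 / 16384 by field; lra.
have s3 : u ^ 2 * D * g * K ^ 3 >= (N * u) ^ 3 * K ^ 3 / 16384.
  have : 0 <= K ^ 3 by lra.
  have : (N * u) ^ 3 / 16384 <= u ^ 2 * D * g by lra.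
  nra.
have e5 : (N * u) ^ 3 * K ^ 3 = (N * u * K) ^ 3 by ring.
have s4 : (/ 4) ^ 3 <= (N * u * K) ^ 3 by apply: pow_incr; lra.
rewrite cst_val.
have : (/ 4) ^ 3 / 16384 = / 1048576 by field.
lra.
Qed.



Lemma final (n k : nat) (G lam eta : R) :
  (2 <= n)%N -> (1 <= k)%N -> 0 < lam -> 0 < G -> 0 < eta ->
  lam / 2 * ((qq lam eta ^ n) ^ 2) ^ k * 1 ^ 2 +
  lam / 2 * ((eta * gam G) ^ 2 * Dq n (qq lam eta) / (2 * (INR n - 1))) *
    geo ((qq lam eta ^ n) ^ 2) k
  >= cst * Rmin lam (G ^ 2 / (lam * INR n * INR k ^ 3)).
Proof.
move=> hn hk hl hG he.
have hN : 2 <= INR n.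
  have -> : 2 = INR 2 by rewrite /=; lra. apply: le_INR; apply/leP; exact: hn.
have hK : 1 <= INR k.
  have -> : 1 = INR 1 by rewrite /=; lra. apply: le_INR; apply/leP; exact: hk.
set N := INR n in hN *. set K := INR k in hK *.
set u := eta * lam.
have hu : 0 < u by rewrite /u; nra.
have hq : qq lam eta = 1 - u by rewrite /qq /u; ring.
set q := qq lam eta in hq *.
have heta : eta = u / lam by rewrite /u; field; lra.
rewrite heta.
have hc : 0 < cst by rewrite /cst; apply: Rinv_0_lt_compat; lra.
set g := geo ((q ^ n) ^ 2) k.
have hz : 0 <= (q ^ n) ^ 2 by apply: pow2_ge_0.
have hg0 : 0 <= g by apply: geo_ge0.
have hD0 : 0 <= Dq n q by apply: sumR_ge0 => i _; apply: Dq_ge0_in.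
have hT1 : 0 <= lam / 2 * ((q ^ n) ^ 2) ^ k * 1 ^ 2.
  have := pow_le _ k hz. have : 0 <= 1 ^ 2 by apply: pow2_ge_0. nra.
have hK3 : 1 <= K ^ 3 by have := pow_incr 1 K 3; rewrite pow1; lra.
have hT2 : 0 <= lam / 2 * ((u / lam * gam G) ^ 2 * Dq n q / (2 * (N - 1))) * g.
  apply: Rmult_le_pos => //; apply: Rmult_le_pos; first lra.
  apply: Rmult_le_pos; first (apply: Rmult_le_pos => //; apply: pow2_ge_0).
  apply: Rlt_le; apply: Rinv_0_lt_compat; lra.
have hM1 := Rmin_l lam (G ^ 2 / (lam * N * K ^ 3)).
have hM2 := Rmin_r lam (G ^ 2 / (lam * N * K ^ 3)).
have eG : G ^ 2 / (lam * N * K ^ 3) = 4 * gam G ^ 2 / (lam * N * K ^ 3).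
  rewrite /gam; field; split; lra.
have hM2' : Rmin lam (G ^ 2 / (lam * N * K ^ 3)) <= 4 * gam G ^ 2 / (lam * N * K ^ 3) by rewrite -eG.
clear hM2.
apply: Rle_ge.
case: (Rle_lt_dec u (/ (4 * N * K))) => hA.
  have hu1 : u <= 1.
    have : / (4 * N * K) <= 1.
      rewrite -Rinv_1; apply: Rinv_le_contravar; nra.
    lra.
  have hp : ((q ^ n) ^ 2) ^ k = q ^ (n * 2 * k)%coq_nat by rewrite !pow_mult.
  have hb := bern u (n * 2 * k)%coq_nat (conj (Rlt_le _ _ hu) hu1).
  rewrite !mult_INR -/N -/K -hq -hp in hb.
  have h4 : u * (4 * N * K) <= 1.
    have := Rmult_le_compat_r (4 * N * K) _ _ (ltac:(nra)) hA.
    rewrite Rinv_l; nra.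
  have e2 : INR 2 = 2 by rewrite /=; lra.
  rewrite e2 in hb.
  have h12 : 1 / 2 <= ((q ^ n) ^ 2) ^ k by nra.
  have : lam / 4 <= lam / 2 * ((q ^ n) ^ 2) ^ k * 1 ^ 2 by rewrite pow1; nra.
  have : cst * Rmin lam (G ^ 2 / (lam * N * K ^ 3)) <= cst * lam.
    apply: Rmult_le_compat_l; lra.
  rewrite /cst; lra.
suff hX : 16 * cst <= u ^ 2 * Dq n q * g * K ^ 3.
  have := @reduce N K lam (gam G) u (Dq n q) g cst hN hK hl (ltac:(rewrite /gam; lra)) hu (Rlt_le _ _ hc) hX.
  have : cst * Rmin lam (G ^ 2 / (lam * N * K ^ 3)) <= cst * (4 * gam G ^ 2 / (lam * N * K ^ 3)).
    apply: Rmult_le_compat_l; lra.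
  lra.
rewrite /g /K /N hq.
case: (Rlt_le_dec (/ 32) u) => hD; first exact: regD.
case: (Rlt_le_dec (/ (4 * INR n)) u) => hC; first exact: regC.
exact: regB.
Qed.

Theorem proposition1 :
  exists c : R, 0 < c /\
  forall (n k : nat) (G lam : R),
    (2 <= n)%N -> ~~ odd n -> (1 <= k)%N ->
    0 < lam -> 0 < G -> G >= 2 * lam ->
    exists (a b : 'I_n -> R) (x0 xs : R),
      assumption_A lam G a b x0 xs /\
      forall eta : R, 0 < eta ->
        rr_expect a b eta k (fun x => Favg a b x - Favg a b xs) x0
          >= c * Rmin lam (G ^ 2 / (lam * INR n * INR k ^ 3)).
Proof.
exists cst; split; first by rewrite /cst; apply: Rinv_0_lt_compat; lra.
move=> n k G lam hn hodd hk hl hG hGl.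
exists (av n lam), (bv n G), 1, 0; split; first exact: assumA.
move=> eta he.
rewrite (@rr_main n lam G eta hn hodd) (@VV_eq n lam G eta hn hodd).
exact: final.
Qed.
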